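(* Let $L$ be a language and suppose that a language $A$ over an alphabet $\Sigma$ is definable by a sentence $\varphi\in Q^{\star}_L\mathrm{FO}$ of the form $Q^\star_L R_1,\dots,R_t[\psi_1,\dots,\psi_{s-1}]$ in which all quantified relation variables $R_i$ have arity $k$. Let $\sharp\notin\Sigma$. Then the language $A^*=\{w\,\sharp^{|w|^k-|w|} : w\in A\}$ over $\Sigma\cup\{\sharp\}$ is definable in $\mathrm{FO}(Q^{\star}_L,+,\times)$.
   Context: Strings as structures: a nonempty string $b_0\cdots b_{n-1}$ over the ordered alphabet $(a_1,\dots,a_s)$ is the structure with universe $\{0,\dots,n-1\}$, natural order $<$, and unary predicates $P_{a_i}=\{j:b_j=a_i\}$. FO uses $=$, $<$, these predicates, $\min,\max$, connectives, $\exists,\forall$; ''$+,\times$'' means the ternary relations $i+j=k$ and $i\cdot j=k$ are additionally built in. Quantifier $Q^\star_L$ of arity $m\ge1$: for $L$ over $(a_1,\dots,a_s)$ and distinct $m$-ary relation variables $\overline X=(X_1,\dots,X_t)$, over universe $\{0,\dots,n-1\}$ encode $A_i\subseteq\{0,\dots,n-1\}^m$ by the bit string $s^i_0\cdots s^i_{n^m-1}$ with $s^i_j=1$ iff the $j$-th tuple in lexicographic order belongs to $A_i$; order all assignments lexicographically by the concatenated code $s^1_0\cdots s^1_{n^m-1}\cdots s^t_0\cdots s^t_{n^m-1}$. Then $\mathcal A\models Q^\star_L\overline X[\varphi_1,\dots,\varphi_{s-1}]$ iff the word whose $i$-th letter is $a_j$ for the least $j$ with $\varphi_j$ true at the $i$-th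 assignment (and $a_s$ if none) lies in $L$. $Q^\star_L\mathrm{FO}$ consists of formulas $Q^\star_L\overline X[\varphi_1,\dots,\varphi_{s-1}]$, $\overline X$ relation variables of some arity, $\varphi_i$ first-order (only $<$ built in). $\mathrm{FO}(Q^\star_L,+,\times)$ denotes first-order logic with built-in $<,+,\times$, extended by unary second-order variables and closed under application of the monadic ($m=1$) quantifier $Q^\star_L$. *)

(* Defs.v *)
From mathcomp Require Import all_boot.
Set Implicit Arguments. Unset Strict Implicit. Unset Printing Implicit Defensive.

Inductive term : Type := TVar of nat | TMin | TMax.

Definition eval_term (n : nat) (env : nat -> nat) (u : term) : nat :=
  match u with TVar x => env x | TMin => 0 | TMax => n.-1 end.

Definition tvars (u : term) : seq nat := if u is TVar x then [:: x] else [::].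

Definition upd (env : nat -> nat) (x a : nat) : nat -> nat :=
  fun y => if y == x then a else env y.

Definition letter_at {S : eqType} (w : seq S) (p : nat) (a : S) : bool :=
  nth None (map Some w) p == Some a.

Fixpoint bitstrings (N : nat) : seq (seq bool) :=
  if N is N'.+1 then [seq false :: b | b <- bitstrings N'] ++ [seq true :: b | b <- bitstrings N']
  else [:: [::]].

Fixpoint tuples_lex (n k : nat) : seq (seq nat) :=
  if k is k'.+1 then flatten [seq [seq i :: u | u <- tuples_lex n k'] | i <- iota 0 n]
  else [:: [::]].

(* The alphabet of L is
   'I_s.+1 = (a_1,...,a_{s+1}) in its natural order. *)
Definition pick_letter (s : nat) (bs : 'I_s -> bool) : 'I_s.+1 :=
  head ord_max [seq widen_ord (leqnSn s) j | j <- filter bs (enum 'I_s)].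

Inductive fo1 (S : Type) (t k : nat) : Type :=
| F1Eq of term & term
| F1Lt of term & term
| F1P of S & term
| F1Rel of 'I_t & k.-tuple term
| F1Not of fo1 S t k
| F1And of fo1 S t k & fo1 S t k
| F1Or of fo1 S t k & fo1 S t k
| F1Ex of nat & fo1 S t k
| F1All of nat & fo1 S t k.

Fixpoint fv1 {S : Type} {t k : nat} (f : fo1 S t k) : seq nat :=
  match f with
  | F1Eq u v | F1Lt u v => tvars u ++ tvars v
  | F1P _ u => tvars u
  | F1Rel _ us => flatten [seq tvars u | u <- us]
  | F1Not g => fv1 g
  | F1And g h | F1Or g h => fv1 g ++ fv1 h
  | F1Ex x g | F1All x g => filter (fun y => y != x) (fv1 g)
  end.

Fixpoint sat1 {S : eqType} {t k : nat} (w : seq S) (rel : 'I_t -> seq nat -> bool)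
  (env : nat -> nat) (f : fo1 S t k) : bool :=
  let n := size w in
  match f with
  | F1Eq u v => eval_term n env u == eval_term n env v
  | F1Lt u v => eval_term n env u < eval_term n env v
  | F1P a u => letter_at w (eval_term n env u) a
  | F1Rel i us => rel i [seq eval_term n env u | u <- us]
  | F1Not g => ~~ sat1 w rel env g
  | F1And g h => sat1 w rel env g && sat1 w rel env h
  | F1Or g h => sat1 w rel env g || sat1 w rel env h
  | F1Ex x g => has (fun a => sat1 w rel (upd env x a) g) (iota 0 n)
  | F1All x g => all (fun a => sat1 w rel (upd env x a) g) (iota 0 n)
  end.

(* decoding of a concatenated code b (length t * n^k) into t k-ary relations:
   tuple u is in A_i iff bit number (j) of the i-th block is 1, where u is the
   j-th tuple in lexicographic order *)
Definition rel_of (t n k : nat) (b : seq bool) : 'I_t -> seq nat -> bool :=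
  fun i u => (u \in tuples_lex n k) && nth false b (i * n ^ k + index u (tuples_lex n k)).

(* w |= Q*_L R_1..R_t [psi_1,...,psi_s]   (sentence: the psi_j are closed) *)
Definition qsat1 {S : eqType} (s t k : nat) (L : pred (seq 'I_s.+1))
  (psi : 'I_s -> fo1 S t k) (w : seq S) : bool :=
  let n := size w in
  L [seq pick_letter (fun j => sat1 w (@rel_of t n k b) (fun _ => 0) (psi j))
    | b <- bitstrings (t * n ^ k)].

Inductive fo2 (G : Type) (s : nat) : Type :=
| F2Eq of term & term
| F2Lt of term & term
| F2Plus of term & term & term
| F2Times of term & term & term
| F2P of G & term
| F2In of nat & term
| F2Not of fo2 G s
| F2And of fo2 G s & fo2 G s
| F2Or of fo2 G s & fo2 G s
| F2Ex of nat & fo2 G s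
| F2All of nat & fo2 G s
| F2Q of seq nat & ('I_s -> fo2 G s). (* Q*_L X_1..X_t [phi_1..phi_s], monadic *)

Fixpoint fv2 {G : Type} {s : nat} (f : fo2 G s) : seq nat :=
  match f with
  | F2Eq u v | F2Lt u v => tvars u ++ tvars v
  | F2Plus u v r | F2Times u v r => tvars u ++ tvars v ++ tvars r
  | F2P _ u | F2In _ u => tvars u
  | F2Not g => fv2 g
  | F2And g h | F2Or g h => fv2 g ++ fv2 h
  | F2Ex x g | F2All x g => filter (fun y => y != x) (fv2 g)
  | F2Q _ phis => flatten [seq fv2 (phis j) | j <- enum 'I_s]
  end.

Fixpoint fsv2 {G : Type} {s : nat} (f : fo2 G s) : seq nat :=
  match f with
  | F2Eq _ _ | F2Lt _ _ | F2Plus _ _ _ | F2Times _ _ _ | F2P _ _ => [::]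
  | F2In X _ => [:: X]
  | F2Not g | F2Ex _ g | F2All _ g => fsv2 g
  | F2And g h | F2Or g h => fsv2 g ++ fsv2 h
  | F2Q Xs phis => filter (fun Y => Y \notin Xs) (flatten [seq fsv2 (phis j) | j <- enum 'I_s])
  end.

Fixpoint wf2 {G : Type} {s : nat} (f : fo2 G s) : bool :=
  match f with
  | F2Eq _ _ | F2Lt _ _ | F2Plus _ _ _ | F2Times _ _ _ | F2P _ _ | F2In _ _ => true
  | F2Not g | F2Ex _ g | F2All _ g => wf2 g
  | F2And g h | F2Or g h => wf2 g && wf2 h
  | F2Q Xs phis => (0 < size Xs) && uniq Xs && all (fun j => wf2 (phis j)) (enum 'I_s)
  end.

Definition supd (senv : nat -> nat -> bool) (Xs : seq nat) (n : nat) (b : seq bool)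
  : nat -> nat -> bool :=
  fun Y e => if Y \in Xs then nth false b (index Y Xs * n + e) else senv Y e.

Fixpoint sat2 {G : eqType} {s : nat} (L : pred (seq 'I_s.+1)) (w : seq G)
  (senv : nat -> nat -> bool) (env : nat -> nat) (f : fo2 G s) : bool :=
  let n := size w in
  match f with
  | F2Eq u v => eval_term n env u == eval_term n env v
  | F2Lt u v => eval_term n env u < eval_term n env v
  | F2Plus u v r => eval_term n env u + eval_term n env v == eval_term n env r
  | F2Times u v r => eval_term n env u * eval_term n env v == eval_term n env r
  | F2P a u => letter_at w (eval_term n env u) a
  | F2In X u => senv X (eval_term n env u)
  | F2Not g => ~~ sat2 L w senv env g
  | F2And g h => sat2 L w senv env g && sat2 L w senv env h
  | F2Or g h => sat2 L w senv env g || sat2 L w senv env h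
  | F2Ex x g => has (fun a => sat2 L w senv (upd env x a) g) (iota 0 n)
  | F2All x g => all (fun a => sat2 L w senv (upd env x a) g) (iota 0 n)
  | F2Q Xs phis =>
      L [seq pick_letter (fun j => sat2 L w (supd senv Xs n b) env (phis j))
        | b <- bitstrings (size Xs * n)]
  end.

(** * The padded language A^* = { w #^(|w|^k - |w|) : w in A },  # = None *)
Definition A_star {S : Type} (A : pred (seq S)) (k : nat) (v : seq (option S)) : Prop :=
  exists w, A w /\ v = map Some w ++ nseq (size w ^ k - size w) None.

(* Main.v *)
Require Import Defs.
From mathcomp Require Import all_boot zify.
Set Implicit Arguments. Unset Strict Implicit. Unset Printing Implicit Defensive.

Lemma upd_same env x a : upd env x a x = a.
Proof. by rewrite /upd eqxx. Qed.
Lemma upd_other env x a y : y != x -> upd env x a y = env y.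
Proof. by rewrite /upd => /negbTE ->. Qed.

Lemma hasE (P : pred nat) c N :
  has (fun p => (c == p) && P p) (iota 0 N) = (c < N) && P c.
Proof.
case: (ltnP c N) => h /=.
- apply/hasP/idP => [[p _ /andP[/eqP <- //]]|Pc].
  by exists c; [rewrite mem_iota | rewrite eqxx].
- apply/hasP => [[p]]; rewrite mem_iota => /andP[_ pN] /andP[/eqP cp _]; lia.
Qed.

Lemma hasR (P : pred nat) m N : m <= N ->
  has (fun a => (a < m) && P a) (iota 0 N) = has P (iota 0 m).
Proof.
move=> mN; rewrite -(subnKC mN) iotaD has_cat add0n.
have -> : has (fun a => (a < m) && P a) (iota m (N - m)) = false.
  by apply/hasP => [[a]]; rewrite mem_iota => /andP[ma _] /andP[am _]; lia.
rewrite orbF; apply: eq_in_has => a; rewrite mem_iota add0n => /andP[_ ->] //.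
Qed.

Lemma allR (P : pred nat) m N : m <= N ->
  all (fun a => (m <= a) || P a) (iota 0 N) = all P (iota 0 m).
Proof.
move=> mN; rewrite -(subnKC mN) iotaD all_cat add0n.
have -> : all (fun a => (m <= a) || P a) (iota m (N - m)) = true.
  by apply/allP => a; rewrite mem_iota => /andP[-> _].
rewrite andbT; apply: eq_in_all => a; rewrite mem_iota add0n => /andP[_ am].
by rewrite leqNgt am.
Qed.

Definition dv d j := (3*d + j).*2.
Definition okt d (u : term) := all (fun y => odd y || (y < (3*d+1).*2)) (tvars u).

Lemma okt_upd d j u n env c : 0 < j -> okt d u ->
  eval_term n (upd env (dv d j) c) u = eval_term n env u.
Proof.
move=> j0; case: u => //= y; rewrite ?andbT => H; rewrite upd_other //.
apply/eqP => E; move: H; rewrite E /dv /okt /= andbT; case/orP; [by rewrite odd_double | rewrite -!muln2; lia].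
Qed.

Lemma okt_S d u : okt d u -> okt d.+1 u.
Proof. case: u => //= y; rewrite /okt /= !andbT => /orP[->//|H]; apply/orP; right; rewrite -!muln2 in H *; lia. Qed.

Fixpoint horner (m a : nat) (u : seq nat) : nat :=
  if u is x :: u' then horner m (a * m + x) u' else a.
Fixpoint enc (m : nat) (u : seq nat) : nat :=
  if u is x :: u' then x * m ^ size u' + enc m u' else 0.

Lemma hornerE m a u : horner m a u = a * m ^ size u + enc m u.
Proof.
elim: u a => [|x u IH] a /=; first by rewrite expn0 muln1 addn0.
by rewrite IH expnS mulnDl addnA mulnA [a * m]mulnC.
Qed.

Lemma horner_ge m a u : 0 < m -> a <= horner m a u.
Proof.
move=> m0; rewrite hornerE; apply: leq_trans (leq_addr _ _).
by rewrite leq_pmulr // expn_gt0 m0.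
Qed.

Fixpoint enc_f (G : Type) (s : nat) (fin : term -> fo2 G s) (us : seq term)
  (acc : term) (d : nat) : fo2 G s :=
  match us with
  | [::] => fin acc
  | u :: us' =>
    F2Ex (dv d 1) (F2And (@F2Times G s acc (TVar 0) (TVar (dv d 1)))
     (F2Ex (dv d 2) (F2And (@F2Plus G s (TVar (dv d 1)) acc (TVar (dv d 2)))
      (F2Ex (dv d 3) (F2And (@F2Plus G s (TVar (dv d 2)) u (TVar (dv d 3)))
        (@enc_f G s fin us' (TVar (dv d 3)) d.+1))))))
  end.

Lemma dv_eq d i j : (dv d i == dv d j) = (i == j).
Proof. rewrite /dv -!muln2; apply/eqP/eqP; lia. Qed.
Lemma dv_eq0' d j : 0 < j -> (dv d j == 0) = false.
Proof. rewrite /dv -!muln2 => h; apply/eqP; lia. Qed.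

Lemma dv_eq0 d j : 0 < j -> (0 == dv d j) = false.
Proof. rewrite /dv -!muln2 => h; apply/eqP; lia. Qed.

Lemma upd_dv0 env d j c : 0 < j -> upd env (dv d j) c 0 = env 0.
Proof. by move=> h; rewrite /upd dv_eq0. Qed.
Lemma upd_dvij env d i j c : i != j -> upd env (dv d i) c (dv d j) = env (dv d j).
Proof. by move=> h; rewrite /upd dv_eq eq_sym (negbTE h). Qed.

Lemma map_all_eq (T1 T2 : Type) (P : pred T1) (f g : T1 -> T2) us :
  all P us -> (forall u, P u -> f u = g u) -> map f us = map g us.
Proof. by elim: us => //= u us IH /andP[pu pus] H; rewrite H // IH. Qed.

Lemma enc_sem (G : eqType) s (L : pred (seq 'I_s.+1)) (v : seq G) senv
  (fin : term -> fo2 G s) (Pf : nat -> bool) :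
  (forall env e, sat2 L v senv env (fin e) = Pf (eval_term (size v) env e)) ->
  forall us d acc env, okt d acc -> all (okt d) us ->
  eval_term (size v) env acc < size v ->
  sat2 L v senv env (enc_f fin us acc d) =
   (horner (env 0).+1 (eval_term (size v) env acc) (map (eval_term (size v) env) us) < size v)
   && Pf (horner (env 0).+1 (eval_term (size v) env acc) (map (eval_term (size v) env) us)).
Proof.
move=> Hfin; elim=> [|u us IH] d acc env oka okus alt /=; first by rewrite Hfin alt.
case/andP: okus => oku okus0.
have okus : all (okt d) us := okus0.
set N := size v; set a := eval_term N env acc; set x := eval_term N env u.
set mx := env 0.
transitivity (has (fun c1 => (a * mx == c1) && has (fun c2 => (c1 + a == c2) &&
   has (fun c3 => (c2 + x == c3) && sat2 L v senv
      (upd (upd (upd env (dv d 1) c1) (dv d 2) c2) (dv d 3) c3)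
      (enc_f fin us (TVar (dv d 3)) d.+1)) (iota 0 N)) (iota 0 N)) (iota 0 N)).
  apply: eq_in_has => c1 _ /=; congr andb; first by rewrite okt_upd // upd_dv0 // upd_same.
  apply: eq_in_has => c2 _ /=; congr andb; first by rewrite !okt_upd // upd_dvij // !upd_same.
  apply: eq_in_has => c3 _ /=; congr andb; by rewrite !okt_upd // upd_dvij // !upd_same.
rewrite hasE; under eq_has do rewrite hasE.
rewrite hasE.
have -> : a * mx.+1 + x = a * mx + a + x by rewrite mulnS; lia.
set c3 := a * mx + a + x.
set vals := map (eval_term N env) us.
have hge : c3 <= horner mx.+1 c3 vals by apply: horner_ge.
case: (ltnP c3 N) => c3N; last first.
  by rewrite !andbF; case: (ltnP (horner mx.+1 c3 vals) N) => // hN; lia.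
set env3 := upd (upd (upd env (dv d 1) (a * mx)) (dv d 2) (a * mx + a)) (dv d 3) c3.
rewrite IH /=; first last.
- by rewrite /env3 upd_same.
- exact: (sub_all (@okt_S d) okus).
- by rewrite /okt /= /dv -!muln2 andbT; apply/orP; right; lia.
have -> : env3 0 = mx by rewrite /env3 !upd_dv0.
have -> : env3 (dv d 3) = c3 by rewrite /env3 upd_same.
have -> : map (eval_term N env3) us = vals.
  by rewrite /vals; apply: (map_all_eq okus) => y oy; rewrite /env3 !okt_upd.
case: (ltnP (horner mx.+1 c3 vals) N) => hN /=; last by rewrite !andbF.
have -> : a * mx < N by lia.
by have -> : a * mx + a < N by lia.
Qed.

Lemma size_fl (T : seq (seq nat)) a c :
  size (flatten [seq [seq i :: u | u <- T] | i <- iota a c]) = c * size T.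
Proof. elim: c a => [|c IH] a //=. by rewrite size_cat size_map IH mulSn. Qed.

Lemma index_fl (T : seq (seq nat)) a c x u : a <= x < a + c -> u \in T ->
  index (x :: u) (flatten [seq [seq i :: u | u <- T] | i <- iota a c])
  = (x - a) * size T + index u T.
Proof.
elim: c a => [|c IH] a; first by move=> h; lia.
move=> /andP[ax xac] uT /=; rewrite index_cat.
case: (eqVneq x a) => [->|xa].
  have inj : injective (cons a) by move=> ?? [].
  by rewrite mem_map // uT index_map // subnn.
have -> : (x :: u \in [seq a :: u0 | u0 <- T]) = false.
  by apply/mapP => [[u0 _ [E _]]]; move: xa; rewrite E eqxx.
rewrite size_map IH //; last by apply/andP; split; lia.
have -> : x - a = (x - a.+1).+1 by lia.
by rewrite mulSn addnA.
Qed.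

Lemma tuples_size n k : size (tuples_lex n k) = n ^ k.
Proof. by elim: k => //= k IH; rewrite size_fl IH expnS. Qed.

Lemma enc_lt n u : all (fun x => x < n) u -> enc n u < n ^ size u.
Proof.
elim: u => [|x u IH] //= /andP[xn un].
have := IH un; rewrite expnS => h.
have : (x.+1) * n ^ size u <= n * n ^ size u by rewrite leq_mul2r xn orbT.
rewrite mulSn; lia.
Qed.

Lemma tuples_index n k u : size u = k -> all (fun x => x < n) u ->
  index u (tuples_lex n k) = enc n u.
Proof.
elim: k u => [|k IH] [|x u] //= [su] /andP[xn un].
have uT : u \in tuples_lex n k.
  by rewrite -index_mem IH // tuples_size -su enc_lt.
by rewrite index_fl ?add0n ?xn // IH // tuples_size subn0 su mulnC.
Qed.

Lemma tuples_mem n k u : size u = k -> all (fun x => x < n) u ->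
  u \in tuples_lex n k.
Proof. by move=> su un; rewrite -index_mem tuples_index // tuples_size -su enc_lt. Qed.

Lemma nth_some_none (T : eqType) (w : seq T) y :
  (nth None (map Some w) y == None) = (size w <= y).
Proof. by elim: w y => [|x w IH] [|y] //=; rewrite IH. Qed.

Lemma letter_some (T : eqType) (w : seq T) y a :
  letter_at (map Some w) y (Some a) = letter_at w y a.
Proof. by rewrite /letter_at; elim: w y => [|x w IH] [|y] //=. Qed.

Definition trt (u : term) : term :=
  match u with TVar y => TVar y.*2.+1 | TMin => TMin | TMax => TVar 0 end.

Fixpoint tr (S : Type) (s t k : nat) (f : fo1 S t k) : fo2 (option S) s :=
  match f with
  | F1Eq u v => @F2Eq (option S) s (trt u) (trt v)
  | F1Lt u v => @F2Lt (option S) s (trt u) (trt v)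
  | F1P a u => @F2P (option S) s (Some a) (trt u)
  | F1Rel i us => enc_f (fun e => @F2In (option S) s (nat_of_ord i) e) (map trt us) TMin 0
  | F1Not g => F2Not (@tr S s t k g)
  | F1And g h => F2And (@tr S s t k g) (@tr S s t k h)
  | F1Or g h => F2Or (@tr S s t k g) (@tr S s t k h)
  | F1Ex x g => F2Ex x.*2.+1 (F2And (F2Not (@F2Lt (option S) s (TVar 0) (TVar x.*2.+1))) (@tr S s t k g))
  | F1All x g => F2All x.*2.+1 (F2Or (@F2Lt (option S) s (TVar 0) (TVar x.*2.+1)) (@tr S s t k g))
  end.

Lemma dd_eq y x : (y.*2.+1 == x.*2.+1) = (y == x).
Proof. rewrite -!muln2; apply/eqP/eqP; lia. Qed.

Lemma all_map_T (T1 : Type) (P : pred nat) (f : T1 -> nat) s :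
  (forall x, P (f x)) -> all P (map f s).
Proof. by move=> H; elim: s => //= x s ->; rewrite H. Qed.

Lemma all_map_T' (T1 : Type) (P : pred term) (f : T1 -> term) s :
  (forall x, P (f x)) -> all P (map f s).
Proof. by move=> H; elim: s => //= x s ->; rewrite H. Qed.

Lemma index_iota0 i n : i < n -> index i (iota 0 n) = i.
Proof.
move=> h; have E : nth 0 (iota 0 n) i = i by rewrite nth_iota.
by rewrite -{1}E index_uniq ?size_iota ?iota_uniq.
Qed.

Lemma okt_trt u : okt 0 (trt u).
Proof. by case: u => //= y; rewrite /okt /= odd_double. Qed.

Lemma tr_sem (S : eqType) s t k (L : pred (seq 'I_s.+1)) (w : seq S) (b : seq bool) :
  let m := size w in
  let v := map Some w ++ nseq (m ^ k - m) None in
  0 < m -> 0 < k ->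
  forall (f : fo1 S t k) env1 env2, (forall y, env1 y < m) ->
  (forall y, env2 y.*2.+1 = env1 y) -> env2 0 = m.-1 ->
  sat2 L v (supd (fun _ _ => false) (iota 0 t) (size v) b) env2 (@tr S s t k f)
  = sat1 w (@rel_of t m k b) env1 f.
Proof.
move=> m v m0 k0.
have mk : m <= m ^ k by rewrite -{1}(expn1 m) leq_pexp2l.
have sv : size v = m ^ k by rewrite size_cat size_map size_nseq; lia.
have mkv : m <= size v by rewrite sv.
have evt : forall env1 env2 u, (forall y, env2 y.*2.+1 = env1 y) -> env2 0 = m.-1 ->
    eval_term (size v) env2 (trt u) = eval_term m env1 u.
  by move=> e1 e2 [y|//|] /= h1 h2.
have evlt : forall env1 u, (forall y, env1 y < m) -> eval_term m env1 u < m.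
  by move=> e1 [y|//|] /= h; [apply: h | lia].
have let1 : forall p a, p < m -> letter_at v p (Some a) = letter_at w p a.
  move=> p a pm; rewrite -(letter_some w) /letter_at /v map_cat nth_cat size_map size_map.
  by rewrite pm.
elim=> [u1 u2|u1 u2|a u|i us|g IH|g IHg h IHh|g IHg h IHh|x g IH|x g IH]
  env1 env2 H1 H2 H3 /=.
- by rewrite !(evt env1).
- by rewrite !(evt env1).
- by rewrite (evt env1) // let1 // evlt.
- rewrite (@enc_sem _ s L v _ _ (fun e => supd (fun _ _ => false) (iota 0 t) (size v) b i e)) //;
    last 2 first.
  + exact: all_map_T' okt_trt.
  + by rewrite sv expn_gt0 m0.
  rewrite H3 prednK // -map_comp.
  have -> : map (eval_term (size v) env2 \o trt) us = map (eval_term m env1) us.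
    by apply: eq_map => u /=; apply: evt.
  set vals := map (eval_term m env1) us.
  have szv : size vals = k by rewrite size_map size_tuple.
  have allv : all (fun y => y < m) vals by apply: all_map_T => u; apply: evlt.
  rewrite hornerE mul0n add0n sv /rel_of tuples_mem // tuples_index //.
  rewrite -szv enc_lt //= /supd mem_iota ltn_ord /= index_iota0 //.
- by rewrite (IH env1).
- by rewrite (IHg env1) // (IHh env1).
- by rewrite (IHg env1) // (IHh env1).
- rewrite -(hasR _ mkv); apply: eq_in_has => a _ /=.
  rewrite /upd /= eqxx H3.
  have -> : ~~ (m.-1 < a) = (a < m) by apply/idP/idP; lia.
  case: (ltnP a m) => am //=.
  rewrite (IH (upd env1 x a)) //.
  + by move=> y; rewrite /upd; case: ifP.
  + by move=> y; rewrite dd_eq /upd; case: ifP.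
- rewrite -(allR _ mkv); apply: eq_in_all => a _ /=.
  rewrite /upd /= eqxx H3.
  have -> : (m.-1 < a) = (m <= a) by apply/idP/idP; lia.
  case: (ltnP a m) => am //=.
  rewrite (IH (upd env1 x a)) //.
  + by move=> y; rewrite /upd; case: ifP.
  + by move=> y; rewrite dd_eq /upd; case: ifP.
Qed.

Lemma wf_enc (G : Type) s (fin : term -> fo2 G s) :
  (forall e, wf2 (fin e)) -> forall us acc d, wf2 (enc_f fin us acc d).
Proof. by move=> H; elim=> [|u us IH] acc d //=; rewrite IH. Qed.

Lemma wf_tr (S : Type) s t k (f : fo1 S t k) : wf2 (@tr S s t k f).
Proof. by elim: f => //= *; rewrite ?wf_enc // => *; apply/andP. Qed.

Lemma fv_enc (G : Type) s (fin : term -> fo2 G s) :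
  (forall e y, y \in fv2 (fin e) -> y \in tvars e) ->
  forall us acc d y, y \in fv2 (enc_f fin us acc d) ->
  [|| y \in tvars acc, y == 0 | has (fun u => y \in tvars u) us].
Proof.
move=> Hfin; elim=> [|u us IH] acc d y /=; first by move/Hfin => ->.
have {}IH := IH (TVar (dv d 3)) d.+1 y.
rewrite !dv_eq /= !(mem_filter, mem_cat, inE) /= ?(mem_filter, mem_cat, inE) /= in IH *.
move: IH; case: (y \in fv2 (enc_f fin us (TVar (dv d 3)) d.+1));
case: (has (fun u => y \in tvars u) us);
case: (y == dv d 1); case: (y == dv d 2); case: (y == dv d 3); case: (y == 0);
  case: (y \in tvars acc); case: (y \in tvars u) => //=; by move=> /(_ isT).
Qed.

Lemma fv_trt u y : y \in tvars (trt u) -> (y == 0) || (odd y && (y./2 \in tvars u)).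
Proof.
case: u => [z||] //=; rewrite inE => /eqP -> //.
rewrite /= odd_double /=.
by rewrite uphalf_double inE.
Qed.

Lemma fv_trts (us : seq term) y : has (fun u => y \in tvars (trt u)) us ->
  (y == 0) || (odd y && (y./2 \in flatten [seq tvars u | u <- us])).
Proof.
elim: us => //= u us IH /orP[/fv_trt|/IH]; rewrite mem_cat.
  by case/orP=> [->//|/andP[-> ->]]; rewrite /= !orbT.
by case/orP=> [->//|/andP[-> ->]]; rewrite /= !orbT.
Qed.

Lemma fv_tr (S : Type) s t k (f : fo1 S t k) y : y \in fv2 (@tr S s t k f) ->
  (y == 0) || (odd y && (y./2 \in fv1 f)).
Proof.
elim: f y => [u1 u2|u1 u2|a u|i us|g IH|g IHg h IHh|g IHg h IHh|x g IH|x g IH] y /=.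
- by rewrite !mem_cat => /orP[/fv_trt|/fv_trt] /orP[->//|/andP[-> ->]]; rewrite /= !orbT.
- by rewrite !mem_cat => /orP[/fv_trt|/fv_trt] /orP[->//|/andP[-> ->]]; rewrite /= !orbT.
- exact: fv_trt.
- have Hf : forall e z, z \in fv2 (@F2In (option S) s i e) -> z \in tvars e by [].
  move/(fv_enc Hf) => /=.
  by case/orP => [->//|]; rewrite has_map; exact: fv_trts.
- exact: IH.
- by rewrite !mem_cat => /orP[/IHg|/IHh] /orP[->//|/andP[-> ->]]; rewrite /= !orbT.
- by rewrite !mem_cat => /orP[/IHg|/IHh] /orP[->//|/andP[-> ->]]; rewrite /= !orbT.
- rewrite eqxx /= inE mem_filter => /orP[->//|/andP[yx /IH]].
  case/orP=> [->//|/andP[oy hy]]; rewrite oy mem_filter hy andbT orbC /=.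
  apply/orP; left; apply: contra yx => /eqP E; rewrite -E; apply/eqP.
  by rewrite -[in LHS](odd_double_half y) oy add1n.
- rewrite eqxx /= inE mem_filter => /orP[->//|/andP[yx /IH]].
  case/orP=> [->//|/andP[oy hy]]; rewrite oy mem_filter hy andbT orbC /=.
  apply/orP; left; apply: contra yx => /eqP E; rewrite -E; apply/eqP.
  by rewrite -[in LHS](odd_double_half y) oy add1n.
Qed.

Lemma fsv_enc (G : Type) s (fin : term -> fo2 G s) (P : pred nat) :
  (forall e, all P (fsv2 (fin e))) -> forall us acc d, all P (fsv2 (enc_f fin us acc d)).
Proof. by move=> H; elim=> [|u us IH] acc d //=. Qed.

Lemma fsv_tr (S : Type) s t k (f : fo1 S t k) : all (fun Y => Y < t) (fsv2 (@tr S s t k f)).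
Proof.
elim: f => //= *; rewrite ?all_cat; try by apply/andP.
by apply: fsv_enc => e /=; rewrite ltn_ord.
Qed.

Definition fmtA (G : Type) s : fo2 (option G) s :=
  F2All 1 (F2And (F2Or (@F2Lt (option G) s (TVar 0) (TVar 1)) (F2Not (@F2P (option G) s None (TVar 1))))
                 (F2Or (F2Not (@F2Lt (option G) s (TVar 0) (TVar 1))) (@F2P (option G) s None (TVar 1)))).

Definition fmtB (G : Type) s k : fo2 G s :=
  enc_f (fun e => @F2Eq G s e TMax) (nseq k (TVar 0)) TMin 0.

Lemma letter_none (G : eqType) (v : seq (option G)) y : y < size v ->
  letter_at v y None = (nth None v y == None).
Proof. by move=> h; rewrite /letter_at (nth_map None). Qed.

Lemma fmtA_sem (G : eqType) s L (v : seq (option G)) senv env a :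
  sat2 L v senv (upd env 0 a) (@fmtA G s) =
  all (fun y => letter_at v y None == (a < y)) (iota 0 (size v)).
Proof.
apply: eq_in_all => y _ /=; rewrite /upd /=.
by case: (a < y); case: (letter_at v y None).
Qed.

Lemma horner_nseq a c k : horner a.+1 c (nseq k a) + 1 = (c + 1) * a.+1 ^ k.
Proof.
elim: k c => [|k IH] c /=; first by rewrite expn0 muln1.
by rewrite IH expnS mulnA; congr (_ * _); rewrite mulnS; lia.
Qed.

Lemma fmtB_sem (G : eqType) s L (v : seq G) senv env a k : 0 < size v ->
  sat2 L v senv (upd env 0 a) (@fmtB G s k) = (a.+1 ^ k == size v).
Proof.
move=> v0; rewrite /fmtB (@enc_sem _ s L v senv _ (fun e => e == (size v).-1)) //; last first.
- by elim: k.
rewrite /= /upd /= map_nseq /=.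
have := horner_nseq a 0 k; rewrite add0n mul1n => <-.
set H := horner _ _ _.
case: (ltnP H (size v)) => h /=; apply/eqP/eqP; lia.
Qed.

Lemma Q_equiv (S : eqType) s t k (L : pred (seq 'I_s.+1)) (psi : 'I_s -> fo1 S t k)
  (w : seq S) : 0 < size w -> 0 < k ->
  let m := size w in
  let v := map Some w ++ nseq (m ^ k - m) None in
  sat2 L v (fun _ _ => false) (upd (fun _ => 0) 0 m.-1)
    (F2Q (iota 0 t) (fun j => @tr S s t k (psi j))) = qsat1 L psi w.
Proof.
move=> m0 k0 m v.
have mk : m <= m ^ k by rewrite -{1}(expn1 m) leq_pexp2l.
have sv : size v = m ^ k by rewrite size_cat size_map size_nseq; lia.
rewrite /= /qsat1 size_iota sv; congr (L _); apply: eq_map => b.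
rewrite /pick_letter; congr head; congr map; apply: eq_filter => j.
rewrite -sv; apply: tr_sem => //.
Qed.

Lemma pmap_some (T : Type) (s : seq (option T)) :
  all (fun o => if o is Some _ then true else false) s -> map Some (pmap id s) = s.
Proof. by elim: s => [|[x|] s IH] //= /IH ->. Qed.

Theorem proposition5p1 (S : finType) (s t k : nat) (L : pred (seq 'I_s.+1))
  (A : pred (seq S)) (psi : 'I_s -> fo1 S t k) :
  0 < t -> 0 < k ->
  (forall j, fv1 (psi j) = [::]) ->
  (forall w : seq S, w != [::] -> A w = qsat1 L psi w) ->
  exists chi : fo2 (option S) s,
    [/\ wf2 chi, fv2 chi = [::], fsv2 chi = [::] &
      forall v : seq (option S), v != [::] ->
        (A_star A k v <-> sat2 L v (fun _ _ => false) (fun _ => 0) chi)].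
Proof.
move=> t0 k0 hfv hA.
exists (F2Ex 0 (F2And (F2And (@fmtA S s) (@fmtB (option S) s k))
                  (F2Q (iota 0 t) (fun j => @tr S s t k (psi j))))).
split.
- rewrite /= /fmtB wf_enc // size_iota t0 iota_uniq /=.
  by apply/allP => j _; apply: wf_tr.
- case E: (fv2 _) => [//|y l]; exfalso.
  have : y \in y :: l by rewrite inE eqxx.
  rewrite -E /= mem_filter !mem_cat => /andP[y0 /orP[hB|hQ]].
  + have Hf : forall e z, z \in fv2 (@F2Eq (option S) s e TMax) -> z \in tvars e.
      by move=> e z; rewrite /= cats0.
    move: hB => /(fv_enc Hf) /=; rewrite (negbTE y0) has_nseq /= inE (negbTE y0).
    by rewrite andbF.
  + case/flattenP: hQ => l' /mapP [j _ ->] /fv_tr.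
    by rewrite hfv (negbTE y0) andbF.
- rewrite /=.
  have -> : fsv2 (@fmtB (option S) s k) = [::].
    have : all pred0 (fsv2 (@fmtB (option S) s k)) by apply: fsv_enc.
    by case: (fsv2 _).
  apply/eqP; rewrite -[_ == _]negbK -has_filter; apply/hasP => [[Y]].
  case/flattenP => l' /mapP [j _ ->] hY.
  have := allP (@fsv_tr S s t k (psi j)) _ hY.
  by rewrite /= mem_iota add0n => ->.
- move=> v vne; have v0 : 0 < size v by rewrite lt0n size_eq0.
  have -> : sat2 L v (fun _ _ => false) (fun _ => 0)
     (F2Ex 0 (F2And (F2And (@fmtA S s) (@fmtB (option S) s k))
                  (F2Q (iota 0 t) (fun j => @tr S s t k (psi j))))) =
     has (fun a => [&& sat2 L v (fun _ _ => false) (upd (fun _ => 0) 0 a) (@fmtA S s),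
        sat2 L v (fun _ _ => false) (upd (fun _ => 0) 0 a) (@fmtB (option S) s k) &
        sat2 L v (fun _ _ => false) (upd (fun _ => 0) 0 a)
          (F2Q (iota 0 t) (fun j => @tr S s t k (psi j)))]) (iota 0 (size v)).
    by apply: eq_in_has => a _ /=; rewrite andbA.
  split.
  + case=> w [Aw Ev].
    have m0 : 0 < size w.
      rewrite lt0n size_eq0; apply: contra vne => /eqP w0.
      by rewrite Ev w0 /= exp0n.
    have mk : size w <= size w ^ k by rewrite -{1}(expn1 (size w)) leq_pexp2l.
    have sv : size v = size w ^ k by rewrite Ev size_cat size_map size_nseq; lia.
    apply/hasP; exists (size w).-1; first by rewrite mem_iota add0n; lia.
    rewrite fmtA_sem fmtB_sem // prednK // -sv eqxx andTb.
    apply/andP; split.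
      apply/allP => y; rewrite mem_iota add0n => yN; rewrite letter_none; last by case/andP: yN.
      rewrite Ev nth_cat size_map; case: (ltnP y (size w)) => ym.
        by rewrite nth_some_none leqNgt ym.
      by rewrite nth_nseq if_same eqxx; apply/esym/eqP; lia.
    rewrite Ev Q_equiv // -hA //; by rewrite -size_eq0 -lt0n.
  + case/hasP => a; rewrite mem_iota add0n => aN /and3P[hA' hB' hQ].
    rewrite fmtA_sem in hA'; rewrite fmtB_sem // in hB'.
    set m := a.+1.
    have Nm : size v = m ^ k by apply/esym/eqP.
    have mN : m <= size v by [].
    have hy : forall y, y < size v -> (nth None v y == None) = (a < y).
      move=> y yN; rewrite -letter_none //; have := allP hA' y.
      by rewrite mem_iota add0n yN => /(_ isT) /eqP.
    have Et : map Some (pmap id (take m v)) = take m v.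
      apply: pmap_some; apply/(all_nthP None) => i; rewrite size_takel // => im.
      rewrite nth_take //; have := hy i (leq_trans im mN).
      case: (nth None v i) => //=; rewrite eqxx => h.
      have ai : a < i by rewrite -h.
      rewrite /m in im; lia.
    have Ed : drop m v = nseq (size v - m) None.
      rewrite -size_drop; apply/all_pred1P; apply/(all_nthP None) => i.
      rewrite size_drop => iN; rewrite nth_drop /= hy; last by rewrite -ltn_subRL.
      by rewrite /m addSn ltnS leq_addr.
    have [w [Ev szw]] : exists w, v = map Some w ++ nseq (m ^ k - m) None /\ size w = m.
      exists (pmap id (take m v)); split; first by rewrite Et -Nm -Ed cat_take_drop.
      by have := congr1 size Et; rewrite size_map size_takel.
    exists w; split => //.
    rewrite hA; last by rewrite -size_eq0 szw.
    have := @Q_equiv S s t k L psi w; rewrite szw => <- //.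
    rewrite -Ev; first exact: hQ.
    by rewrite szw.
Qed.
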